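(* Every element $h\in S\mathcal V_G$ can be written as $h=f_2^{-1}\,t\,f_1$ for some multicolored forests $f_1,f_2$ and some $G$-twist $t$ (of $\mathfrak C^S(k)$, where $k$ is the common rank of $f_1$ and $f_2$). Moreover, for such a decomposition, $h\in S\mathcal V$ if and only if $t$ is the identity.
   Context: Let $\mathfrak C=\{0,1\}^{\omega}$, $S$ a nonempty set, $G$ a subgroup of the symmetric group of $S$, and $\mathfrak C^S$ the space of functions $S\to\mathfrak C$. For $\psi\colon S\to\{0,1\}^*$ with $\psi(s)=\varnothing$ for all but finitely many $s$, the dyadic brick $B(\psi)$ is the set of $\kappa\in\mathfrak C^S$ with $\psi(s)$ a prefix of $\kappa(s)$ for all $s$; $\Phi_\psi(\kappa)(s)=\psi(s)\cdot\kappa(s)$ is the canonical homeomorphism $\mathfrak C^S\to B(\psi)$; for $\gamma\in G$, $\tau_\gamma(\kappa)(s)=\kappa(\gamma^{-1}s)$, and the twist homeomorphism $B(\varphi)\to B(\psi)$ associated to $\gamma$ is $\Phi_\psi\tau_\gamma\Phi_\varphi^{-1}$. For $m\ge1$, let $\mathfrak C^S(m)=\mathfrak C^S_1\sqcup\dots\sqcup\mathfrak C^S_m$ be a disjoint union of $m$ copies of $\mathfrak C^S$, with $\mathfrak C^S(1)=\mathfrak C^S$. A dyadic brick in $\mathfrak C^S(m)$ is a dyadic brick in one of the cubes; canonical and twist homeomorphisms between bricks in possibly different cubes are defined via the identifications of each cube with $\mathfrak C^S$. $S\mathcal V_G$ is the set of homeomorphisms $h\colon\mathfrak C^S(m)\to\mathfrak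 C^S(n)$ ($m,n\ge1$) for which there are partitions of $\mathfrak C^S(m)$ and $\mathfrak C^S(n)$ into the same number of dyadic bricks $B_i$, $B_i'$ and $\gamma_i\in G$ such that $h$ maps each $B_i$ to $B_i'$ by the twist homeomorphism associated to $\gamma_i$; $S\mathcal V$ is the subset where all $\gamma_i$ may be taken trivial. The number $n$ is the rank of $h$ and $m$ its corank. The direct sum of $h\colon\mathfrak C^S(m)\to\mathfrak C^S(n)$ and $h'\colon\mathfrak C^S(m')\to\mathfrak C^S(n')$ is $h\oplus h'\colon\mathfrak C^S(m+m')\to\mathfrak C^S(n+n')$, acting as $h$ from the first $m$ cubes to the first $n$ cubes and as $h'$ from the remaining $m'$ cubes to the remaining $n'$ cubes. A $G$-twist of $\mathfrak C^S(n)$ is a map $\tau_{\gamma_1}\oplus\dots\oplus\tau_{\gamma_n}$ with $\gamma_i\in G$. A very elementary expansion of a partition $\mathcal P$ of $\mathfrak C^S(m)$ into dyadic bricks is a partition $\mathcal P'$ into dyadic bricks such that every brick of $\mathcal P$ is a union of at most two bricks of $\mathcal P'$; a dyadic partition of $\mathfrak C^S(m)$ is one obtained from $\{\mathfrak C^S_1,\dots,\mathfrak C^S_m\}$ by finitely many very elementary expansions. A multicolored forest is a homeomorphism $f\colon\mathfrak C^S(m)\to\mathfrak C^S(n)$ that maps the bricks $B_1,\dots,B_n$ of some dyadic partition of $\mathfrak C^S(m)$ onto $\mathfrak C^S_1,\dots,\mathfrak C^S_n$ respectively by canonical homeomorphisms. *)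

(* Defs.v *)
From Stdlib Require List.
From mathcomp Require Import all_boot.
Set Implicit Arguments. Unset Strict Implicit. Unset Printing Implicit Defensive.

(* Cantor space C = {0,1}^omega as nat -> bool; words {0,1}^* as seq bool. *)
Definition cantor := nat -> bool.

Record sperm (S : Type) := SPerm {
  pfun : S -> S; pinv : S -> S;
  pfunK : cancel pfun pinv; pinvK : cancel pinv pfun }.

Definition is_subgroup (S : Type) (G : sperm S -> Prop) : Prop :=
  (exists e, G e /\ forall s, pfun e s = s) /\
  (forall a b, G a -> G b -> exists c, G c /\ forall s, pfun c s = pfun a (pfun b s)) /\
  (forall a, G a -> exists c, G c /\ forall s, pfun c s = pinv a s).

Definition prefix (w : seq bool) (c : cantor) : Prop :=
  forall i, i < size w -> c i = nth false w i.
Definition wconcat (w : seq bool) (c : cantor) : cantor :=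
  fun i => if i < size w then nth false w i else c (i - size w).
(* inverse of c |-> w . c on sequences with prefix w *)
Definition wunprefix (w : seq bool) (c : cantor) : cantor :=
  fun i => c (i + size w).

(* Points of C^S(m) = C^S_1 ⊔ ... ⊔ C^S_m *)
Definition pt (S : Type) (m : nat) := ('I_m * (S -> cantor))%type.

Record brick (S : Type) (m : nat) := Brick { bcube : 'I_m; bword : S -> seq bool }.

Definition finsupp (S : Type) (psi : S -> seq bool) : Prop :=
  exists L : list S, forall s, ~ List.In s L -> psi s = [::].

Definition inb (S : Type) (m : nat) (B : brick S m) (x : pt S m) : Prop :=
  x.1 = bcube B /\ forall s, prefix (bword B s) (x.2 s).

Definition Phi (S : Type) (psi : S -> seq bool) (k : S -> cantor) : S -> cantor :=
  fun s => wconcat (psi s) (k s).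
Definition Phiinv (S : Type) (psi : S -> seq bool) (k : S -> cantor) : S -> cantor :=
  fun s => wunprefix (psi s) (k s).

Definition tau (S : Type) (g : sperm S) (k : S -> cantor) : S -> cantor :=
  fun s => k (pinv g s).

Definition twist (S : Type) (m n : nat) (B : brick S m) (B' : brick S n) (g : sperm S)
  (x : pt S m) : pt S n :=
  (bcube B', Phi (bword B') (tau g (Phiinv (bword B) x.2))).

Definition is_partition (S : Type) (m k : nat) (B : 'I_k -> brick S m) : Prop :=
  (forall i, finsupp (bword (B i))) /\ forall x : pt S m, exists! i, inb (B i) x.

Definition SVG (S : Type) (G : sperm S -> Prop) (m n : nat) (h : pt S m -> pt S n) : Prop :=
  exists k (B : 'I_k -> brick S m) (B' : 'I_k -> brick S n) (g : 'I_k -> sperm S),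
    is_partition B /\ is_partition B' /\ (forall i, G (g i)) /\
    forall i x, inb (B i) x -> h x = twist (B i) (B' i) (g i) x.

Definition SV (S : Type) (m n : nat) (h : pt S m -> pt S n) : Prop :=
  SVG (fun g : sperm S => forall s, pfun g s = s) h.

Definition is_Gtwist (S : Type) (G : sperm S -> Prop) (n : nat) (t : pt S n -> pt S n) : Prop :=
  exists g : 'I_n -> sperm S, (forall i, G (g i)) /\
    forall x, t x = (x.1, tau (g x.1) x.2).

Definition very_elem (S : Type) (m k k' : nat) (P : 'I_k -> brick S m) (P' : 'I_k' -> brick S m) : Prop :=
  forall i, exists j1 j2, forall x, inb (P i) x <-> (inb (P' j1) x \/ inb (P' j2) x).

Inductive dyadic (S : Type) (m : nat) : forall k : nat, ('I_k -> brick S m) -> Prop :=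
| dyadic_base : forall B : 'I_m -> brick S m,
    is_partition B -> (forall i x, x.1 = bcube (B i) -> inb (B i) x) -> dyadic B
| dyadic_step : forall k (P : 'I_k -> brick S m) k' (P' : 'I_k' -> brick S m),
    dyadic P -> is_partition P' -> very_elem P P' -> dyadic P'.

Definition forest (S : Type) (m n : nat) (f : pt S m -> pt S n) : Prop :=
  exists B : 'I_n -> brick S m, dyadic B /\
    forall i x, inb (B i) x -> f x = (i, Phiinv (bword (B i)) x.2).

(* Main.v *)
Require Import Defs.
From mathcomp Require Import all_boot zify.
From Stdlib Require Import ClassicalEpsilon FunctionalExtensionality.
Set Implicit Arguments. Unset Strict Implicit. Unset Printing Implicit Defensive.


Lemma prefix_wconcat w c : Defs.prefix w (wconcat w c).
Proof. by move=> i hi; rewrite /wconcat hi. Qed.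

Lemma wunprefixK w c : wunprefix w (wconcat w c) = c.
Proof.
apply: functional_extensionality => i; rewrite /wunprefix /wconcat.
by rewrite ltnNge leq_addl /= addnK.
Qed.

Lemma wconcatK w c : Defs.prefix w c -> wconcat w (wunprefix w c) = c.
Proof.
move=> hp; apply: functional_extensionality => i; rewrite /wunprefix /wconcat.
case: ifP => hi; first by rewrite hp.
by rewrite subnK // leqNgt hi.
Qed.

Lemma prefix_cat a b c : Defs.prefix (a ++ b) c <-> Defs.prefix a c /\ Defs.prefix b (wunprefix a c).
Proof.
split.
- move=> hp; split.
  + move=> i hi; rewrite hp ?size_cat ?nth_cat ?hi //; exact: leq_trans hi (leq_addr _ _).
  + move=> i hi; rewrite /wunprefix hp ?size_cat; last by rewrite addnC ltn_add2l.
    by rewrite nth_cat ltnNge leq_addl /= addnK.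
- move=> [ha hb] i; rewrite size_cat nth_cat => hi.
  case: ifP => h; first exact: ha.
  have hj : i - size a < size b by rewrite ltn_subLR // leqNgt h.
  by rewrite -(hb _ hj) /wunprefix subnK // leqNgt h.
Qed.

Lemma wconcat_cat a b c : wconcat (a ++ b) c = wconcat a (wconcat b c).
Proof.
apply: functional_extensionality => i; rewrite /wconcat size_cat nth_cat.
case: (ltnP i (size a)) => h.
  by rewrite (leq_trans h (leq_addr (size b) (size a))).
case: (ltnP i (size a + size b)) => h2.
  by rewrite ltn_subLR // h2.
have -> : (i - size a < size b) = false by apply/negbTE; rewrite -leqNgt leq_subRL.
by rewrite subnDA.
Qed.

Lemma wunprefix_cat a b c : wunprefix (a ++ b) c = wunprefix b (wunprefix a c).
Proof.
apply: functional_extensionality => i; by rewrite /wunprefix size_cat -addnA (addnC (size b)).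
Qed.

Lemma prefix_eq a b c : Defs.prefix a c -> Defs.prefix b c -> size a = size b -> a = b.
Proof.
move=> ha hb hs; apply: (eq_from_nth (x0 := false)) => // i hi.
by rewrite -ha // hb // -hs.
Qed.

Lemma prefix_le a b c : Defs.prefix a c -> Defs.prefix b c -> size a <= size b ->
  a ++ drop (size a) b = b.
Proof.
move=> ha hb hs; apply: (eq_from_nth (x0 := false)).
  by rewrite size_cat size_drop subnKC.
move=> i; rewrite size_cat size_drop subnKC // => hi.
rewrite nth_cat; case: ifP => h.
  by rewrite -ha // hb.
by rewrite nth_drop subnKC // leqNgt h.
Qed.

Lemma eqdec (S : Type) (a b : S) : {a = b} + {a <> b}.
Proof. exact: excluded_middle_informative. Qed.

Definition Seq (S : Type) (a b : S) : bool := is_left (eqdec a b).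
Lemma SeqP (S : Type) (a b : S) : reflect (a = b) (Seq a b).
Proof. by rewrite /Seq; case: eqdec => h; constructor. Qed.
Lemma SeqE (S : Type) (a : S) : Seq a a = true.
Proof. by apply/SeqP. Qed.

Section Bricks.
Variable S : Type.
Variable m : nat.

Definition bext (B : brick S m) (u : S -> seq bool) : brick S m :=
  Brick (bcube B) (fun s => bword B s ++ u s).

Definition cpt (B : brick S m) : pt S m :=
  (bcube B, fun s => wconcat (bword B s) (fun _ => false)).

Lemma inb_cpt B : inb B (cpt B).
Proof. by split => // s; apply: prefix_wconcat. Qed.

Lemma inb_bext B u x : inb (bext B u) x <->
  inb B x /\ forall s, Defs.prefix (u s) (wunprefix (bword B s) (x.2 s)).
Proof.
split.
- by case=> h1 h2; split; [split=> // s|move=> s]; have /prefix_cat[] := h2 s.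
- by case=> [[h1 h2] h3]; split=> // s; apply/prefix_cat.
Qed.

Lemma inb_bext_base B u x : inb (bext B u) x -> inb B x.
Proof. by case/inb_bext. Qed.

Lemma brick_eq (B B' : brick S m) x : inb B x -> inb B' x ->
  (forall s, size (bword B s) = size (bword B' s)) -> B = B'.
Proof.
case: B => c w; case: B' => c' w' [/= h1 h2] [/= h1' h2'] hs.
rewrite -h1 -h1'; congr Brick; apply: functional_extensionality => s.
exact: prefix_eq (h2 s) (h2' s) (hs s).
Qed.

Lemma brick_sub (B B' : brick S m) x : inb B x -> inb B' x ->
  (forall s, size (bword B s) <= size (bword B' s)) ->
  B' = bext B (fun s => drop (size (bword B s)) (bword B' s)).
Proof.
case: B => c w; case: B' => c' w' [/= h1 h2] [/= h1' h2'] hs.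
rewrite /bext /= -h1 -h1'; congr Brick; apply: functional_extensionality => s.
by rewrite (prefix_le (h2 s) (h2' s) (hs s)).
Qed.

Lemma bext_nil B : bext B (fun _ => [::]) = B.
Proof.
case: B => c w; rewrite /bext /=; congr Brick; apply: functional_extensionality => s.
by rewrite cats0.
Qed.

Lemma bext_bext B u v : bext (bext B u) v = bext B (fun s => u s ++ v s).
Proof.
rewrite /bext /=; congr Brick; apply: functional_extensionality => s.
by rewrite catA.
Qed.

Lemma part_uniq k (P : 'I_k -> brick S m) i j x :
  is_partition P -> inb (P i) x -> inb (P j) x -> i = j.
Proof.
case=> _ h hi hj; case: (h x) => i0 [_ hu].
by rewrite -(hu _ hi) -(hu _ hj).
Qed.

Lemma part_ex k (P : 'I_k -> brick S m) x :
  is_partition P -> exists i, inb (P i) x.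
Proof. by case=> _ h; case: (h x) => i [hi _]; exists i. Qed.

Lemma dyadic_part k (P : 'I_k -> brick S m) : dyadic P -> is_partition P.
Proof. by case. Qed.

Definition cubes : 'I_m -> brick S m := fun i => Brick i (fun _ => [::]).

Lemma cubes_dyadic : dyadic cubes.
Proof.
apply: dyadic_base.
  split; first by move=> i; exists nil.
  move=> x; exists x.1; split; first by split=> // s i; rewrite /= ltn0.
  by move=> j [h _].
by move=> i x h; split=> // s j; rewrite /= ltn0.
Qed.

End Bricks.

Section Split.
Variable S : Type.
Variable m : nat.
Variable k : nat.
Variable P : 'I_k -> brick S m.
Variable i0 : 'I_k.
Variable s0 : S.

Definition ebit (b : bool) : S -> seq bool :=
  fun s => if Seq s s0 then [:: b] else [::].

Definition halfb b := bext (P i0) (ebit b).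

Definition R (r : 'I_k.+1) : brick S m :=
  match unlift ord_max r with
  | Some i => if i == i0 then halfb false else P i
  | None => halfb true
  end.

Definition xbit (x : pt S m) := x.2 s0 (size (bword (P i0) s0)).

Lemma inb_halfb b x : inb (halfb b) x <-> inb (P i0) x /\ xbit x = b.
Proof.
rewrite /halfb inb_bext; split.
- case=> h1 h2; split=> //; move: (h2 s0); rewrite /ebit SeqE => h.
  by have := h 0 isT; rewrite /wunprefix /xbit add0n.
- case=> h1 h2; split=> // s; rewrite /ebit; case: SeqP => [->|_] //.
  by move=> [|j] // _; rewrite /wunprefix add0n.
Qed.

Lemma R_lift i : R (lift ord_max i) = if i == i0 then halfb false else P i.
Proof. by rewrite /R liftK. Qed.

Lemma R_max : R ord_max = halfb true.
Proof. by rewrite /R unlift_none. Qed.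

Definition rx (i : 'I_k) (x : pt S m) : 'I_k.+1 :=
  if i == i0 then (if xbit x then ord_max else lift ord_max i0) else lift ord_max i.

Lemma R_in i x : is_partition P -> inb (P i) x -> inb (R (rx i x)) x.
Proof.
move=> hP hi; rewrite /rx; case: eqP => [e|ne].
  subst i; case hb: (xbit x).
    by rewrite R_max; apply/inb_halfb.
  by rewrite R_lift eqxx; apply/inb_halfb.
by rewrite R_lift; case: eqP.
Qed.

Lemma R_key i x r : is_partition P -> inb (P i) x -> inb (R r) x -> r = rx i x.
Proof.
move=> hP hi; rewrite /R /rx; case: unliftP => [j ->|->].
  case: eqP => [e|ne].
    subst j; case/inb_halfb => h1 h2.
    by rewrite -(part_uniq hP h1 hi) eqxx h2.
  move=> hj; have e := part_uniq hP hj hi; subst j.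
  by case: eqP.
case/inb_halfb => h1 h2.
by rewrite -(part_uniq hP h1 hi) eqxx h2.
Qed.

Lemma halfb_fs b : is_partition P -> finsupp (bword (halfb b)).
Proof.
case=> hf _; case: (hf i0) => L hL; exists (s0 :: L) => s hs.
rewrite /halfb /bext /= hL /ebit; last by move=> h; apply: hs; right.
by case: SeqP => // e; case: hs; left.
Qed.

Lemma R_part : is_partition P -> is_partition R.
Proof.
move=> hP; split.
  move=> r; rewrite /R; case: unlift => [i|]; last exact: halfb_fs.
  by case: eqP => _; [apply: halfb_fs|case: hP].
move=> x; case: (part_ex x hP) => i hi.
exists (rx i x); split; first exact: R_in.
by move=> r hr; rewrite (R_key hP hi hr).
Qed.

Lemma R_very : is_partition P -> very_elem P R.
Proof.
move=> hP i; case: (eqVneq i i0) => [->|ne].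
  exists (lift ord_max i0), ord_max => x; rewrite R_lift eqxx R_max.
  split.
    move=> h; case hb: (xbit x); [right|left]; exact/inb_halfb.
  by case=> /inb_halfb [].
exists (lift ord_max i), (lift ord_max i) => x; rewrite R_lift (negbTE ne).
by split; [left|case].
Qed.

Lemma R_dyadic : dyadic P -> dyadic R.
Proof.
move=> hd; have hP := dyadic_part hd.
exact: dyadic_step hd (R_part hP) (R_very hP).
Qed.

End Split.

Section LE.
Variable S : Type.
Variable m : nat.

Definition nL (l : S -> nat) (L : seq S) := \sum_(s <- L) l s.
Definition mu k (l : 'I_k -> S -> nat) (Ls : 'I_k -> seq S) :=
  \sum_(i < k) (2 ^ nL (l i) (Ls i)).-1.

Lemma nL_le (l l' : S -> nat) L : (forall s, l s <= l' s) -> nL l L <= nL l' L.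
Proof.
move=> h; elim: L => [|a L IH]; first by rewrite /nL !big_nil.
by rewrite /nL !big_cons leq_add.
Qed.

Lemma nL_lt (l l' : S -> nat) L s0 : (forall s, l s <= l' s) -> l s0 < l' s0 ->
  List.In s0 L -> nL l L < nL l' L.
Proof.
move=> h h0; elim: L => [//|a L IH] /= hin.
rewrite /nL !big_cons; case: hin => [e|hin]; first subst a.
  by rewrite -addSn leq_add // nL_le.
by rewrite -addnS leq_add // IH.
Qed.

Lemma widen_lift k (i : 'I_k) : widen_ord (leqnSn k) i = lift ord_max i.
Proof. by apply: val_inj; rewrite /= /bump leqNgt ltn_ord. Qed.

Lemma LE_ind N : forall k (P : 'I_k -> brick S m) (l : 'I_k -> S -> nat) (Ls : 'I_k -> seq S),
  mu l Ls <= N -> dyadic P -> (forall i s, ~ List.In s (Ls i) -> l i s = 0) ->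
  exists k' (Q : 'I_k' -> brick S m), dyadic Q /\
    forall j, exists i u, (forall s, size (u s) = l i s) /\ Q j = bext (P i) u.
Proof.
elim: N => [|N IH] k P l Ls hmu hd hsup.
all: case: (classic (exists i s, 0 < l i s)) => [[i0 [s0 hpos]]|hno].
2,4: exists k, P; split=> // j; exists j, (fun _ => [::]); split; last by rewrite bext_nil.
2,3: move=> s /=; apply/esym/eqP; rewrite eqn0Ngt; apply/negP => hp; apply: hno; by exists j, s.
all: have hin : List.In s0 (Ls i0)
      by apply: NNPP => hn; move: (hsup i0 s0 hn) hpos => ->.
-
  exfalso; move: hmu; rewrite leqn0 /mu => /eqP.
  rewrite (bigD1 i0) //= => /eqP; rewrite addn_eq0 => /andP [h _].
  have : 0 < nL (l i0) (Ls i0).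
    by apply: (@leq_trans (nL (fun _ => 0) (Ls i0)).+1); [|apply: (nL_lt (s0 := s0))].
  move: h; case: (nL _ _) => // n; rewrite expnS; lia.
- pose lh := fun s => if Seq s s0 then (l i0 s0).-1 else l i0 s.
  pose lR := fun r : 'I_k.+1 => match unlift ord_max r with
                 Some i => if i == i0 then lh else l i | None => lh end.
  pose LsR := fun r : 'I_k.+1 => match unlift ord_max r with
                 Some i => Ls i | None => Ls i0 end.
  have hlh : forall s, lh s <= l i0 s.
    by move=> s; rewrite /lh; case: SeqP => [->|]; [apply: leq_pred|].
  have hlh0 : lh s0 < l i0 s0 by rewrite /lh SeqE; lia.
  have hmuR : mu lR LsR <= N.
    rewrite -ltnS; apply: leq_trans hmu; rewrite /mu big_ord_recr /=.
    under eq_bigr => i _ do rewrite widen_lift /lR /LsR liftK.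
    rewrite /lR /LsR unlift_none (bigD1 i0) //= eqxx [X in _ < X](bigD1 i0) //=.
    rewrite (eq_bigr (fun i => (2 ^ nL (l i) (Ls i)).-1)); last first.
      by move=> i /negbTE ->.
    have h1 := nL_lt hlh hlh0 hin.
    move: h1; set a := nL lh _; set n := nL _ _ => h1.
    have h2 : (2 ^ a).*2 <= 2 ^ n by rewrite -mul2n -expnS leq_exp2l.
    have h3 : 0 < 2 ^ a by rewrite expn_gt0.
    lia.
  have hsupR : forall r s, ~ List.In s (LsR r) -> lR r s = 0.
    move=> r s; rewrite /lR /LsR; case: unlift => [i|] hn.
      case: eqP => [e|_]; last exact: hsup.
      by subst i; apply/eqP; rewrite -leqn0 -(hsup i0 s hn) hlh.
    by apply/eqP; rewrite -leqn0 -(hsup i0 s hn) hlh.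
  case: (IH _ (R P i0 s0) lR LsR hmuR (R_dyadic i0 s0 hd) hsupR) => k' [Q [hQ hQa]].
  exists k', Q; split=> // j; case: (hQa j) => r [u [hu ->]].
  move: hu; rewrite /lR /LsR /R.
  case: unlift => [i|] hu.
    case: eqP => [e|ne].
      subst i; exists i0, (fun s => ebit s0 false s ++ u s); split; last by rewrite /halfb bext_bext.
      move=> s; rewrite size_cat hu eqxx /lh /ebit; case: SeqP => [->|ne] /=; lia.
    by exists i, u; split=> // s; rewrite hu; case: eqP.
  exists i0, (fun s => ebit s0 true s ++ u s); split; last by rewrite /halfb bext_bext.
  move=> s; rewrite size_cat hu /lh /ebit; case: SeqP => [->|ne] /=; lia.
Qed.

Lemma LE k (P : 'I_k -> brick S m) (l : 'I_k -> S -> nat) (Ls : 'I_k -> seq S) :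
  dyadic P -> (forall i s, ~ List.In s (Ls i) -> l i s = 0) ->
  exists k' (Q : 'I_k' -> brick S m), dyadic Q /\
    forall j, exists i u, (forall s, size (u s) = l i s) /\ Q j = bext (P i) u.
Proof. exact: (@LE_ind (mu l Ls)). Qed.

End LE.

Section Forest.
Variable S : Type.

Lemma PhiK (psi : S -> seq bool) w : Phiinv psi (Phi psi w) = w.
Proof. by apply: functional_extensionality => s; rewrite /Phiinv /Phi wunprefixK. Qed.

Lemma inb_Phi m (B : brick S m) w : inb B (bcube B, Phi (bword B) w).
Proof. by split=> // s; apply: prefix_wconcat. Qed.

Lemma forest_inv m n (f : pt S m -> pt S n) finv (Bf : 'I_n -> brick S m) :
  (forall i x, inb (Bf i) x -> f x = (i, Phiinv (bword (Bf i)) x.2)) ->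
  cancel f finv -> forall i w, finv (i, w) = (bcube (Bf i), Phi (bword (Bf i)) w).
Proof.
move=> hf hc i w; have := hf i _ (inb_Phi (Bf i) w).
by rewrite PhiK => <-; rewrite hc.
Qed.

Lemma prefix_agree w c c' : Defs.prefix w c -> (forall p, p < size w -> c p = c' p) ->
  Defs.prefix w c'.
Proof. by move=> h h' p hp; rewrite -h' // h. Qed.

Definition idp : sperm S := @SPerm S id id (fun _ => erefl) (fun _ => erefl).

Lemma pinv_id (e : sperm S) : (forall s, pfun e s = s) -> forall s, pinv e s = s.
Proof. by move=> h s; rewrite -{2}(pinvK e s) h. Qed.

Lemma part2 (G : sperm S -> Prop) m n (h : pt S m -> pt S n) k (f1 : pt S m -> pt S k) (f2 : pt S n -> pt S k)
      (f2inv : pt S k -> pt S n) (t : pt S k -> pt S k) :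
      forest f1 -> forest f2 -> cancel f2 f2inv -> cancel f2inv f2 ->
      is_Gtwist G t -> (forall x, h x = f2inv (t (f1 x))) ->
      (SV h <-> forall y, t y = y).
Proof.
move=> [B1 [hd1 hf1]] [B2 [hd2 hf2]] hc1 hc2 [g [hG ht]] hh.
have hinv := forest_inv hf2 hc1.
have hhx : forall i x, inb (B1 i) x ->
    h x = (bcube (B2 i), Phi (bword (B2 i)) (tau (g i) (Phiinv (bword (B1 i)) x.2))).
  by move=> i x hx; rewrite hh (hf1 _ _ hx) ht /= hinv.
split.
- move=> [k0 [C [C' [e [hC [hC' [he hCx]]]]]]] [i z].
  suff hg : forall s, pinv (g i) s = s.
    rewrite ht /=; congr pair; apply: functional_extensionality => s; by rewrite /tau hg.
  move=> s; apply: NNPP => ne.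
  set s' := pinv (g i) s in ne.
  set x0 := cpt (B1 i).
  have hx0 : inb (B1 i) x0 by apply: inb_cpt.
  case: (part_ex x0 hC) => j hj.
  pose L := size (bword (B1 i) s') + size (bword (C j) s').
  pose x1 : pt S m := (x0.1, fun r => if Seq r s' then (fun p => if p < L then x0.2 s' p else true) else x0.2 r).
  have agree : forall w r, (r = s' -> size w <= L) -> Defs.prefix w (x0.2 r) -> Defs.prefix w (x1.2 r).
    move=> w r hw hp; apply: (prefix_agree hp) => p hp'; rewrite /x1 /=.
    by case: SeqP => [eq|//]; rewrite (leq_trans hp' (hw eq)) eq.
  have hx1 : inb (B1 i) x1.
    split; first by case: hx0.
    move=> r; apply: agree; last by case: hx0.
    by move=> ->; apply: leq_addr.
  have hx1' : inb (C j) x1.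
    split; first by case: hj.
    move=> r; apply: agree; last by case: hj.
    by move=> ->; apply: leq_addl.
  have e0 : (h x0).2 s = (h x1).2 s.
    rewrite (hCx _ _ hj) (hCx _ _ hx1') /twist /= /Phi /tau /Phiinv (pinv_id (he j)).
    by rewrite /x1 /=; case: SeqP => // eq; exfalso; apply: ne; rewrite eq.
  move: e0; rewrite (hhx _ _ hx0) (hhx _ _ hx1) /= /Phi /tau /Phiinv -/s'.
  move/(congr1 (fun c => c (size (bword (B2 i) s) + L))).
  rewrite /wconcat ltnNge leq_addr /= addKn /wunprefix SeqE !ltnNge leq_addr leq_addl /=; by [].
- move=> hid; exists k, B1, B2, (fun _ => idp); split; first exact: dyadic_part hd1.
  split; first exact: dyadic_part hd2.
  split; first by [].
  move=> i x hx; rewrite (hhx _ _ hx) /twist ; congr pair.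
  have := ht (i, Phiinv (bword (B1 i)) x.2); rewrite hid /= => [[<-]].
  done.
Qed.
End Forest.

Definition pb (P : Prop) : bool := is_left (excluded_middle_informative P).
Lemma pbP (P : Prop) : reflect P (pb P).
Proof. by rewrite /pb; case: excluded_middle_informative => h; constructor. Qed.

Lemma In_enum k (i : 'I_k) : List.In i (enum 'I_k).
Proof.
have : i \in enum 'I_k by rewrite mem_enum.
elim: (enum 'I_k) => [//|a s IH] /=; rewrite in_cons => /orP [/eqP ->|h]; [by left|by right; apply: IH].
Qed.

Definition maxl (T : Type) (f : T -> nat) (L : seq T) := foldr (fun s acc => maxn (f s) acc) 0 L.
Lemma maxl_ge (T : Type) (f : T -> nat) L s : List.In s L -> f s <= maxl f L.
Proof.
elim: L => [//|a L IH] /= [->|h]; first exact: leq_maxl.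
exact: leq_trans (IH h) (leq_maxr _ _).
Qed.

Definition fsl (T : Type) (w : T -> seq bool) (h : finsupp w) : seq T :=
  proj1_sig (constructive_indefinite_description _ h).
Lemma fslP (T : Type) (w : T -> seq bool) (h : finsupp w) s : ~ List.In s (fsl h) -> w s = [::].
Proof. rewrite /fsl; case: constructive_indefinite_description => L hL /=; exact: hL. Qed.

Definition pidx (S : Type) m k (P : 'I_k -> brick S m) (hP : is_partition P) (x : pt S m) : 'I_k :=
  proj1_sig (constructive_indefinite_description _ (part_ex x hP)).
Lemma pidxP (S : Type) m k (P : 'I_k -> brick S m) (hP : is_partition P) x : inb (P (pidx hP x)) x.
Proof. by rewrite /pidx; case: constructive_indefinite_description. Qed.

Lemma PhiinvK (S : Type) m (B : brick S m) y : inb B y ->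
  (bcube B, Phi (bword B) (Phiinv (bword B) y.2)) = y.
Proof.
case: y => c z [/= <- hp]; congr pair; apply: functional_extensionality => s.
by rewrite /Phi /Phiinv wconcatK.
Qed.

Section Part1.
Variables (S : Type) (G : sperm S -> Prop) (m n : nat) (h : pt S m -> pt S n).
Variables (k0 : nat) (B : 'I_k0 -> brick S m) (B' : 'I_k0 -> brick S n) (g : 'I_k0 -> sperm S).
Hypotheses (hB : is_partition B) (hB' : is_partition B') (hG : forall i, G (g i))
  (hx : forall i x, inb (B i) x -> h x = twist (B i) (B' i) (g i) x).

Definition LB i := fsl (proj1 hB i).
Definition LB' i := fsl (proj1 hB' i).
Definition T := List.flat_map LB' (enum 'I_k0).
Definition T' := List.flat_map LB (enum 'I_k0) ++ List.flat_map (fun i => map (pinv (g i)) T) (enum 'I_k0).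
Definition Mx := \max_(i < k0) maxl (fun s => size (bword (B' i) s)) (LB' i).
Definition Mb := \max_(i < k0) maxl (fun s => size (bword (B i) s)) (LB i).
Definition M' := Mx + Mb.
Definition Mlen s := if pb (List.In s T) then Mx else 0.
Definition Z r := if pb (List.In r T') then M' else 0.

Lemma Z_supp (i : 'I_m) s : ~ List.In s T' -> Z s = 0.
Proof. by rewrite /Z; case: pbP. Qed.
Lemma Mlen_supp (i : 'I_n) s : ~ List.In s T -> Mlen s = 0.
Proof. by rewrite /Mlen; case: pbP. Qed.

Lemma LB'_T i s : List.In s (LB' i) -> List.In s T.
Proof. by move=> hs; apply/List.in_flat_map; exists i; split=> //; apply: In_enum. Qed.

Lemma LB_T' i s : List.In s (LB i) -> List.In s T'.
Proof.
by move=> hs; apply/List.in_app_iff; left; apply/List.in_flat_map; exists i; split=> //; apply: In_enum.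
Qed.

Lemma T_T' i s : List.In s T -> List.In (pinv (g i) s) T'.
Proof.
move=> hs; apply/List.in_app_iff; right; apply/List.in_flat_map; exists i; split; first exact: In_enum.
exact: List.in_map.
Qed.

Lemma B'_nil i s : ~ List.In s T -> bword (B' i) s = [::].
Proof. by move=> hs; apply: (@fslP _ _ (proj1 hB' i)) => h'; apply: hs; apply: LB'_T h'. Qed.

Lemma B_nil i s : ~ List.In s T' -> bword (B i) s = [::].
Proof. by move=> hs; apply: (@fslP _ _ (proj1 hB i)) => h'; apply: hs; apply: LB_T' h'. Qed.

Lemma B'_le i s : size (bword (B' i) s) <= Mlen s.
Proof.
rewrite /Mlen; case: pbP => hs; last by rewrite B'_nil.
case: (classic (List.In s (LB' i))) => hi.
  apply: leq_trans (maxl_ge (fun s => size (bword (B' i) s)) hi) _.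
  rewrite /Mx; exact: (leq_bigmax (F := fun i => maxl (fun s => size (bword (B' i) s)) (LB' i)) i).
by rewrite (fslP hi).
Qed.

Lemma B_leMb i s : size (bword (B i) s) <= Mb.
Proof.
case: (classic (List.In s (LB i))) => hi.
  apply: leq_trans (maxl_ge (fun s => size (bword (B i) s)) hi) _.
  rewrite /Mb; exact: (leq_bigmax (F := fun i => maxl (fun s => size (bword (B i) s)) (LB i)) i).
by rewrite /LB in hi; rewrite (fslP hi).
Qed.

Lemma B_le i s : size (bword (B i) s) <= Z s.
Proof.
rewrite /Z; case: pbP => hs; last by rewrite B_nil.
by apply: leq_trans (B_leMb i s) _; rewrite /M' leq_addl.
Qed.


Variables (kE : nat) (E : 'I_kE -> brick S m) (hEd : dyadic E)
  (hEa : forall j, exists c u, (forall s, size (u s) = Z s) /\ E j = bext (cubes S c) u).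
Variables (kD : nat) (D : 'I_kD -> brick S n) (hDd : dyadic D)
  (hDa : forall j, exists c u, (forall s, size (u s) = Mlen s) /\ D j = bext (cubes S c) u).

Lemma hEsz j s : size (bword (E j) s) = Z s.
Proof. by case: (hEa j) => c [u [hu ->]]; rewrite /= hu. Qed.
Lemma hDsz j s : size (bword (D j) s) = Mlen s.
Proof. by case: (hDa j) => c [u [hu ->]]; rewrite /= hu. Qed.

Definition hpE := dyadic_part hEd.
Definition iE j := pidx hB (cpt (E j)).
Definition dE j r := drop (size (bword (B (iE j)) r)) (bword (E j) r).
Lemma hEB j : E j = bext (B (iE j)) (dE j).
Proof.
apply: (brick_sub (pidxP hB (cpt (E j))) (inb_cpt (E j))) => s.
by rewrite hEsz B_le.
Qed.

Definition iD j := pidx hB' (cpt (D j)).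
Definition dD j r := drop (size (bword (B' (iD j)) r)) (bword (D j) r).
Lemma hDB j : D j = bext (B' (iD j)) (dD j).
Proof.
apply: (brick_sub (pidxP hB' (cpt (D j))) (inb_cpt (D j))) => s.
by rewrite hDsz B'_le.
Qed.

Definition F j := bext (B' (iE j)) (fun s => dE j (pinv (g (iE j)) s)).
Definition ut i (x : pt S n) : pt S m :=
  (bcube (B i), fun r => wconcat (bword (B i) r)
      (wunprefix (bword (B' i) (pfun (g i) r)) (x.2 (pfun (g i) r)))).

Lemma inb_ut i x : inb (B i) (ut i x).
Proof. by split=> // r; apply: prefix_wconcat. Qed.

Lemma KEY j x : inb (B' (iE j)) x -> (inb (F j) x <-> inb (E j) (ut (iE j) x)).
Proof.
move=> hx'; rewrite [X in inb X (ut _ _)](hEB j) /F !inb_bext /ut /= .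
set i := iE j; split.
- case=> _ hp; split; first exact: inb_ut.
  move=> r; rewrite wunprefixK; have := hp (pfun (g i) r); by rewrite pfunK.
- case=> _ hp; split=> // s; have := hp (pinv (g i) s); by rewrite wunprefixK pinvK.
Qed.

Lemma E_twist j x : inb (E j) x ->
  h x = (bcube (F j), Phi (bword (F j)) (tau (g (iE j)) (Phiinv (bword (E j)) x.2))).
Proof.
move=> hxE; have hxB : inb (B (iE j)) x by move: hxE; rewrite [X in inb X _](hEB j) => /inb_bext_base.
rewrite (hx hxB) /twist /F /=; congr pair; apply: functional_extensionality => s.
rewrite /Phi /tau /Phiinv wconcat_cat; congr wconcat.
set r := pinv (g (iE j)) s.
have hp : Defs.prefix (dE j r) (wunprefix (bword (B (iE j)) r) (x.2 r)).
  by move: hxE; rewrite [X in inb X _](hEB j) => /inb_bext [_]; apply.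
have eE : bword (E j) r = bword (B (iE j)) r ++ dE j r by rewrite {1}(hEB j).
by rewrite eE wunprefix_cat wconcatK.
Qed.


Lemma F_sub j x : inb (F j) x -> inb (B' (iE j)) x.
Proof. exact: inb_bext_base. Qed.
Lemma E_sub j y : inb (E j) y -> inb (B (iE j)) y.
Proof. by rewrite [X in inb X _](hEB j); apply: inb_bext_base. Qed.

Lemma F_part : is_partition F.
Proof.
split.
  move=> j; set i := iE j.
  exists (LB' i ++ map (pfun (g i)) (fsl (proj1 hpE j))) => s hs.
  rewrite /F /= (@fslP _ _ (proj1 hB' i)); last by move=> h'; apply: hs; apply/List.in_app_iff; left.
  rewrite /dE (@fslP _ _ (proj1 hpE j)) //.
  move=> h'; apply: hs; apply/List.in_app_iff; right.
  by rewrite -{1}(pinvK (g i) s); apply: List.in_map.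
move=> x; set i := pidx hB' x; have hxi : inb (B' i) x := pidxP hB' x.
set y := ut i x; set j := pidx hpE y; have hyj : inb (E j) y := pidxP hpE y.
have e : iE j = i by apply: part_uniq hB (E_sub hyj) (inb_ut i x).
exists j; split.
  by apply/KEY; rewrite e.
move=> j' hj'; have e' : iE j' = i by apply: part_uniq hB' (F_sub hj') hxi.
have : inb (E j') (ut (iE j') x) by apply/KEY => //; apply: F_sub.
by rewrite e' => hy'; apply: part_uniq hpE hyj hy'.
Qed.

Definition lD b s := size (bword (B' (iD b)) s) + Z (pinv (g (iD b)) s)
   - size (bword (B (iD b)) (pinv (g (iD b)) s)) - Mlen s.
Definition LsD b := T ++ map (pfun (g (iD b))) T'.

Lemma lD_supp b s : ~ List.In s (LsD b) -> lD b s = 0.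
Proof.
move=> hs.
have hT : ~ List.In s T by move=> h'; apply: hs; apply/List.in_app_iff; left.
have hT' : ~ List.In (pinv (g (iD b)) s) T'.
  move=> h'; apply: hs; apply/List.in_app_iff; right.
  by rewrite -{1}(pinvK (g (iD b)) s); apply: List.in_map.
rewrite /lD B'_nil // /Z /Mlen; case: pbP => // _; case: pbP => // _.
Qed.

Variables (kF : nat) (F' : 'I_kF -> brick S n) (hF'd : dyadic F')
  (hF'a : forall a, exists b u, (forall s, size (u s) = lD b s) /\ F' a = bext (D b) u).

Lemma F_very : very_elem F' F.
Proof.
move=> a; set x := cpt (F' a); have hx0 : inb (F' a) x := inb_cpt _.
case: (part_ex x F_part) => j hj.
suff -> : F' a = F j by exists j, j => y; split; [left|case].
case: (hF'a a) => b [u [hu eF]].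
have hxD : inb (D b) x by move: hx0; rewrite eF; apply: inb_bext_base.
have hxB' : inb (B' (iD b)) x by move: hxD; rewrite [X in inb X _](hDB b); apply: inb_bext_base.
have ei : iE j = iD b by apply: part_uniq hB' (F_sub hj) hxB'.
apply: (brick_eq hx0 hj) => s.
rewrite eF /= size_cat hDsz hu /F /= size_cat /dE size_drop hEsz ei /lD.
set r := pinv (g (iD b)) s.
have h1 : size (bword (B (iD b)) r) <= Z r by apply: B_le.
have h2 : Mlen s <= size (bword (B' (iD b)) s) + Z r - size (bword (B (iD b)) r).
  rewrite /Mlen; case: pbP => // hs.
  have : Z r = M' by rewrite /Z; case: pbP => // hn; exfalso; apply: hn; apply: T_T'.
  have := B_leMb (iD b) r; rewrite /M'; lia.
lia.
Qed.

Lemma F_dyadic : dyadic F.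
Proof. exact: dyadic_step hF'd F_part F_very. Qed.


Lemma part1_exists : exists (k : nat) (f1 : pt S m -> pt S k) (f2 : pt S n -> pt S k)
          (f2inv : pt S k -> pt S n) (t : pt S k -> pt S k),
      forest f1 /\ forest f2 /\ cancel f2 f2inv /\ cancel f2inv f2 /\
      is_Gtwist G t /\ forall x, h x = f2inv (t (f1 x)).
Proof.
pose hpF := F_part.
exists kE, (fun x => (pidx hpE x, Phiinv (bword (E (pidx hpE x))) x.2)),
  (fun y => (pidx hpF y, Phiinv (bword (F (pidx hpF y))) y.2)),
  (fun p => (bcube (F p.1), Phi (bword (F p.1)) p.2)),
  (fun p => (p.1, tau (g (iE p.1)) p.2)).
split.
  exists E; split=> // i x hxi; have e := part_uniq hpE (pidxP hpE x) hxi; by rewrite e.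
split.
  exists F; split; first exact: F_dyadic.
  move=> i x hxi; have e := part_uniq hpF (pidxP hpF x) hxi; by rewrite e.
split.
  move=> y /=; exact: PhiinvK (pidxP hpF y).
split.
  move=> [j w] /=; have hin := inb_Phi (F j) w.
  by have e := part_uniq hpF (pidxP hpF _) hin; rewrite e PhiK.
split.
  by exists (fun j => g (iE j)); split=> // j; apply: hG.
move=> x /=; exact: E_twist (pidxP hpE x).
Qed.

End Part1.

Theorem lemma2p2 (S : Type) (HS : inhabited S) (G : sperm S -> Prop) (HG : is_subgroup G)
  (m n : nat) (Hm : 0 < m) (Hn : 0 < n) (h : pt S m -> pt S n) :
  SVG G h ->
  (exists (k : nat) (f1 : pt S m -> pt S k) (f2 : pt S n -> pt S k)
          (f2inv : pt S k -> pt S n) (t : pt S k -> pt S k),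
      forest f1 /\ forest f2 /\ cancel f2 f2inv /\ cancel f2inv f2 /\
      is_Gtwist G t /\ forall x, h x = f2inv (t (f1 x))) /\
  (forall (k : nat) (f1 : pt S m -> pt S k) (f2 : pt S n -> pt S k)
          (f2inv : pt S k -> pt S n) (t : pt S k -> pt S k),
      forest f1 -> forest f2 -> cancel f2 f2inv -> cancel f2inv f2 ->
      is_Gtwist G t -> (forall x, h x = f2inv (t (f1 x))) ->
      (SV h <-> forall y, t y = y)).
Proof.
move=> hsvg; split; last first.
  move=> k f1 f2 f2inv t h1 h2 h3 h4 h5 h6; exact: (part2 h1 h2 h3 h4 h5 h6).
case: hsvg => k0 [B [B' [g [hB [hB' [hG hx]]]]]].
have [kE [E [hEd hEa]]] := LE (l := fun _ => Z g hB hB') (Ls := fun _ => T' g hB hB') (cubes_dyadic S m)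
  (@Z_supp _ _ _ _ _ _ g hB hB').
have [kD [D [hDd hDa]]] := LE (l := fun _ => Mlen hB') (Ls := fun _ => T hB') (cubes_dyadic S n)
  (@Mlen_supp _ _ _ _ hB').
have [kF [F' [hF'd hF'a]]] := LE (l := lD g hB hB' D) (Ls := LsD g hB hB' D) hDd (@lD_supp _ _ _ _ _ _ g hB hB' _ D).
exact: (part1_exists hG hx hEd hEa hDa hF'd hF'a).
Qed.
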